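(* Let $(G,\Phi)$ be a self-replicating contracting self-similar group of degree $d$ with $G$ finitely generated, and let $G_0=G_0^{un}/H$ be a standard contracting cover with epimorphism $\pi:G_0\to G$ induced by $\pi^{un}$. Then $\varphi^{un}$ induces a homomorphism $\varphi_1:G_0\to G_0\wr S_d$ such that the self-similar group $(G_0,\varphi_1)$ is contracting and self-replicating with nucleus (the image of) $S$, and $\widehat\pi\circ\varphi_1=\Phi\circ\pi$, where $\widehat\pi:G_0\wr S_d\to G\wr S_d$, $((k_x)_{x\in X},\tau)\mapsto((\pi(k_x))_{x\in X},\tau)$.
   Context: Self-similar groups: fix $d\ge 2$, $X=\{0,\dots,d-1\}$, $S_d$ the symmetric group of $X$ acting from the right. $G\wr S_d=G^X\rtimes S_d$ has elements $((g_x)_{x\in X},\tau)$ and product $((g_x),\tau)((g'_x),\tau')=((g_xg'_{x\tau}),\tau\tau')$. A self-similar group of degree $d$ is $(G,\Phi)$ with $\Phi:G\to G\wr S_d$ a homomorphism, $\Phi(g)=((g_x)_x,\tau_g)$. On the set $X^*$ of finite words, define a right action and sections by: empty word fixed, $(xw)g=(x\tau_g)(w\,g_x)$, $g_\emptyset=g$, $g_{xw}=(g_x)_w$. Contracting: there is finite $\mathcal M\subset G$ such that every $g$ has $g_v\in\mathcal M$ for all $v$ of length $\ge k(g)$; the nucleus $\mathcal N$ is the smallest such set. Self-replicating: for all $g\in G$, $x\in X$ there is $h$ with $xh=x$, $h_x=g$. Universal contracting cover: $\mathcal N=\{n_1,\dots,n_\ell\}$, $\Phi(n_i)=((n_{i(x)})_x,\tau_i)$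 (sections of nucleus elements are in $\mathcal N$); $S=\{s_1,\dots,s_\ell\}$; $R$ = words $s_i$ (if $n_i=1$), $s_is_j$ (if $n_in_j=1$), $s_is_js_k$ (if $n_in_jn_k=1$); $G_0^{un}=\langle S\mid R\rangle$, $\pi^{un}(s_i)=n_i$ (an epimorphism); $\varphi^{un}:G_0^{un}\to G_0^{un}\wr S_d$ the homomorphism extending $s_i\mapsto((s_{i(x)})_x,\tau_i)$. Standard contracting cover: for $x\in X$, $n_i\in\mathcal N$ choose $g(x,n_i)\in G$ with $x\,g(x,n_i)=x$, $g(x,n_i)_x=n_i$; choose $h(x,n_i)\in G_0^{un}$ with $\pi^{un}(h(x,n_i))=g(x,n_i)$; put $w(x,n_i)=h(x,n_i)_xs_i^{-1}$ (section w.r.t. $\varphi^{un}$); $E=\{w(x,n_i)_v:x\in X,n_i\in\mathcal N,v\in X^*\}$ (finite); $H$ = normal closure of $E$ in $G_0^{un}$; $G_0=G_0^{un}/H$. *)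

(* Defs.v *)
(* ordinals 'I_d for the alphabet X, {perm 'I_d} for S_d.
   Abstract (possibly infinite) groups are given by an explicit record. *)
From HB Require Import structures.
From mathcomp Require Import all_boot all_order all_fingroup.
From Stdlib Require List.
Set Implicit Arguments. Unset Strict Implicit. Unset Printing Implicit Defensive.

Record Grp := {
  gcar :> Type;
  gmul : gcar -> gcar -> gcar;
  ginv : gcar -> gcar;
  gone : gcar;
  gmulA : forall a b c, gmul a (gmul b c) = gmul (gmul a b) c;
  gmul1 : forall a, gmul gone a = a;
  gmulV : forall a, gmul (ginv a) a = gone }.

Definition gword_eval (G : Grp) (w : seq (G * bool)) : G :=
  foldr (fun a g => gmul (if a.2 then ginv a.1 else a.1) g) (gone G) w.

Definition fin_gen (G : Grp) : Prop :=
  exists gens : seq G, forall g : G, exists w : seq (G * bool),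
    (forall a, List.In a w -> List.In a.1 gens) /\ g = gword_eval w.

Section SelfSimilar.
Variables (G : Grp) (d : nat).
(* Phi g = ((g_x)_x, tau_g); S_d acts on the right: x tau = tau x,
   and (tau * tau')%g x = tau' (tau x) in MathComp, i.e. tau first. *)
Variable Phi : G -> ('I_d -> G) * {perm 'I_d}.

(* Phi is a homomorphism G -> G wr S_d with the product
   ((g_x),tau)((g'_x),tau') = ((g_x g'_{x tau}), tau tau'). *)
Definition is_ss_hom : Prop :=
  forall g h : G,
    (Phi (gmul g h)).2 = ((Phi g).2 * (Phi h).2)%g /\
    forall x, (Phi (gmul g h)).1 x = gmul ((Phi g).1 x) ((Phi h).1 ((Phi g).2 x)).

Definition sect (g : G) (v : seq 'I_d) : G := foldl (fun h x => (Phi h).1 x) g v.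

Definition contracting_set (M : seq G) : Prop :=
  forall g, exists k, forall v : seq 'I_d, k <= size v -> List.In (sect g v) M.

Definition contracting : Prop := exists M, contracting_set M.

Definition is_nucleus (N : seq G) : Prop :=
  contracting_set N /\
  forall M, contracting_set M -> forall n, List.In n N -> List.In n M.

Definition self_replicating : Prop :=
  forall (g : G) (x : 'I_d), exists h, (Phi h).2 x = x /\ (Phi h).1 x = g.

Variable l : nat.
Variable nuc : 'I_l -> G.
Variable idx : 'I_l -> 'I_d -> 'I_l.       (* i(x): (n_i)_x = n_{i(x)} *)

(* words in the free group on S = {s_1..s_l}: (i,false) = s_i, (i,true) = s_i^-1 *)
Definition letter := ('I_l * bool)%type.
Definition word := seq letter.

Definition tau (i : 'I_l) : {perm 'I_d} := (Phi (nuc i)).2.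

Definition lperm (a : letter) : {perm 'I_d} :=
  if a.2 then ((tau a.1)^-1)%g else tau a.1.

(* sections of phi^un(s_i^{+-1}) at x *)
Definition lsec (a : letter) (x : 'I_d) : word :=
  if a.2 then [:: (idx a.1 (((tau a.1)^-1)%g x), true)] else [:: (idx a.1 x, false)].

(* phi^un on words (computed via the wreath product rule) *)
Definition wperm (w : word) : {perm 'I_d} := foldr (fun a p => (lperm a * p)%g) 1%g w.

Fixpoint wsec (w : word) (x : 'I_d) : word :=
  match w with
  | [::] => [::]
  | a :: w' => lsec a x ++ wsec w' (lperm a x)
  end.

Definition wsecv (w : word) (v : seq 'I_d) : word := foldl wsec w v.

Definition leval (a : letter) : G := if a.2 then ginv (nuc a.1) else nuc a.1.
Definition weval (w : word) : G := foldr (fun a g => gmul (leval a) g) (gone G) w.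

Definition is_relator (r : word) : Prop :=
  (exists i, r = [:: (i, false)] /\ nuc i = gone G) \/
  (exists i j, r = [:: (i, false); (j, false)] /\ gmul (nuc i) (nuc j) = gone G) \/
  (exists i j k, r = [:: (i, false); (j, false); (k, false)] /\
                 gmul (gmul (nuc i) (nuc j)) (nuc k) = gone G).

Variable h : 'I_d -> 'I_l -> word.

Definition wE (x : 'I_d) (i : 'I_l) : word := wsec (h x i) x ++ [:: (i, true)].

(* equality in G_0 = <S | R> / <<E>>, E = { w(x,n_i)_v }: the congruence on
   words generated by free cancellation, the relators and the elements of E *)
Inductive g0eq : word -> word -> Prop :=
  | g0_refl w : g0eq w w
  | g0_sym w w' : g0eq w w' -> g0eq w' w
  | g0_trans w1 w2 w3 : g0eq w1 w2 -> g0eq w2 w3 -> g0eq w1 w3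
  | g0_cancel (a b : word) (i : 'I_l) (e : bool) :
      g0eq (a ++ [:: (i, e); (i, ~~ e)] ++ b) (a ++ b)
  | g0_rel (a b r : word) : is_relator r -> g0eq (a ++ r ++ b) (a ++ b)
  | g0_E (a b : word) (x : 'I_d) (i : 'I_l) (v : seq 'I_d) :
      g0eq (a ++ wsecv (wE x i) v ++ b) (a ++ b).

Definition g0_contracting_set (M : seq word) : Prop :=
  forall g : word, exists k, forall v : seq 'I_d, k <= size v ->
    exists m, List.In m M /\ g0eq (wsecv g v) m.

Definition Simg : seq word := [seq [:: (i, false)] | i <- enum 'I_l].

End SelfSimilar.

(* Main.v *)
Require Import Defs.
From HB Require Import structures.
From mathcomp Require Import all_boot all_order all_fingroup.
From Stdlib Require List.
Set Implicit Arguments. Unset Strict Implicit. Unset Printing Implicit Defensive.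

Section Grp.
Variable G : Grp.
Lemma gmulVr (a : G) : gmul a (ginv a) = gone G.
Proof.
rewrite -[in LHS](gmul1 (gmul a (ginv a))) -[in X in gmul X _](gmulV (ginv a)).
rewrite -gmulA [gmul (ginv a) _]gmulA gmulV gmul1 gmulV //.
Qed.
Lemma gmulr1 (a : G) : gmul a (gone G) = a.
Proof. by rewrite -(gmulV a) gmulA gmulVr gmul1. Qed.
Lemma gcancl (a b c : G) : gmul a b = gmul a c -> b = c.
Proof. by move=> E; rewrite -(gmul1 b) -(gmul1 c) -(gmulV a) -!gmulA E. Qed.
Lemma gidem (p : G) : gmul p p = p -> p = gone G.
Proof. by move=> E; apply: (@gcancl p); rewrite E gmulr1. Qed.
Lemma ginv_uniq (a b : G) : gmul a b = gone G -> a = ginv b.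
Proof. by move=> E; rewrite -(gmulr1 a) -(gmulVr b) gmulA E gmul1. Qed.
End Grp.

Section SS.
Variables (G : Grp) (d : nat) (Phi : G -> ('I_d -> G) * {perm 'I_d}).
Variables (l : nat) (nuc : 'I_l -> G) (idx : 'I_l -> 'I_d -> 'I_l).
Hypothesis hom : is_ss_hom Phi.
Hypothesis Hidx : forall i x, (Phi (nuc i)).1 x = nuc (idx i x).

Local Notation wsec := (wsec Phi nuc idx).
Local Notation wperm := (wperm Phi nuc).
Local Notation weval := (weval nuc).
Local Notation lperm := (lperm Phi nuc).
Local Notation lsec := (lsec Phi nuc idx).

Lemma Phi1p : (Phi (gone G)).2 = 1%g.
Proof.
have [E _] := hom (gone G) (gone G); rewrite gmul1 in E.
by apply: (@mulgI _ (Phi (gone G)).2); rewrite mulg1 -E.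
Qed.
Lemma Phi1s x : (Phi (gone G)).1 x = gone G.
Proof.
have [_ E] := hom (gone G) (gone G); move: (E x); rewrite gmul1 Phi1p perm1.
by move=> E'; apply: gidem; rewrite -E'.
Qed.
Lemma PhiVp g : (Phi (ginv g)).2 = ((Phi g).2)^-1%g.
Proof.
have [E _] := hom (ginv g) g; rewrite gmulV Phi1p in E.
by rewrite -[LHS](mulgK (Phi g).2) -E mul1g.
Qed.
Lemma PhiVs g y : (Phi (ginv g)).1 y = ginv ((Phi g).1 (((Phi g).2)^-1%g y)).
Proof.
have [_ E] := hom (ginv g) g; move: (E y); rewrite gmulV Phi1s PhiVp => E'.
by apply: ginv_uniq; rewrite -E'.
Qed.

Lemma weval_cat u v : weval (u ++ v) = gmul (weval u) (weval v).
Proof. by elim: u => [|a u IH] /=; rewrite ?gmul1 // /weval /= -gmulA -IH. Qed.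
Lemma wperm_cat u v : wperm (u ++ v) = (wperm u * wperm v)%g.
Proof. by elim: u => [|a u IH]; rewrite ?mul1g // /wperm /= -mulgA -IH. Qed.
Lemma wperm_cons a u x : wperm (a :: u) x = wperm u (lperm a x).
Proof. by rewrite /wperm /= permM. Qed.
Lemma wsec_cat u v x : wsec (u ++ v) x = wsec u x ++ wsec v (wperm u x).
Proof.
elim: u x => [|a u IH] x /=; first by rewrite /wperm /= perm1.
by rewrite IH catA wperm_cons.
Qed.

Lemma leval_hom a : (Phi (leval nuc a)).2 = lperm a /\
  forall x, (Phi (leval nuc a)).1 x = weval (lsec a x).
Proof.
case: a => i [] /=; rewrite /leval /lperm /lsec /tau /weval /=.
  by split=> [|x]; rewrite ?PhiVp ?PhiVs ?Hidx ?gmulr1.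
by split=> [|x]; rewrite ?Hidx ?gmulr1.
Qed.

Lemma piPhi w : (Phi (weval w)).2 = wperm w /\
  forall x, (Phi (weval w)).1 x = weval (wsec w x).
Proof.
elim: w => [|a w [IH1 IH2]]; first by split=> [|x]; rewrite ?Phi1p ?Phi1s.
have [L1 L2] := leval_hom a.
have [E1 E2] := hom (leval nuc a) (weval w).
split=> [|x]; rewrite /weval /= -/(weval w).
  by rewrite E1 L1 IH1.
by rewrite E2 L1 L2 IH2 -weval_cat.
Qed.
End SS.

Section SS2.
Variables (G : Grp) (d : nat) (Phi : G -> ('I_d -> G) * {perm 'I_d}).
Variables (l : nat) (nuc : 'I_l -> G) (idx : 'I_l -> 'I_d -> 'I_l).
Variable h : 'I_d -> 'I_l -> word l.
Hypothesis hom : is_ss_hom Phi.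
Hypothesis Hidx : forall i x, (Phi (nuc i)).1 x = nuc (idx i x).
Hypothesis Hh : forall x i, (Phi (weval nuc (h x i))).2 x = x /\
               (Phi (weval nuc (h x i))).1 x = nuc i.

Local Notation wsec := (wsec Phi nuc idx).
Local Notation wsecv := (wsecv Phi nuc idx).
Local Notation wperm := (wperm Phi nuc).
Local Notation weval := (weval nuc).
Local Notation lperm := (lperm Phi nuc).
Local Notation lsec := (lsec Phi nuc idx).
Local Notation g0eq := (g0eq Phi nuc idx h).
Local Notation sect := (sect Phi).

Lemma g0_ctx u u' a b : g0eq u u' -> g0eq (a ++ u ++ b) (a ++ u' ++ b).
Proof.
move=> H; elim: H a b => {u u'}.
- by move=> *; apply: g0_refl.
- by move=> w w' _ IH a b; apply: g0_sym.
- by move=> w1 w2 w3 _ IH1 _ IH2 a b; apply: g0_trans (IH1 a b) (IH2 a b).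
- move=> a0 b0 i e a b.
  by have H := g0_cancel Phi nuc idx h (a ++ a0) (b0 ++ b) i e; rewrite -!catA in H *.
- move=> a0 b0 r Hr a b.
  by have H := g0_rel Phi idx h (a ++ a0) (b0 ++ b) Hr; rewrite -!catA in H *.
- move=> a0 b0 x i v a b.
  by have H := g0_E Phi nuc idx h (a ++ a0) (b0 ++ b) x i v; rewrite -!catA in H *.
Qed.

Lemma g0_cat u u' v v' : g0eq u u' -> g0eq v v' -> g0eq (u ++ v) (u' ++ v').
Proof.
move=> H1 H2; apply: g0_trans (_ : g0eq (u' ++ v) _).
  by have := g0_ctx [::] v H1; rewrite /=.
by have := g0_ctx u' [::] H2; rewrite !cats0.
Qed.

Lemma g0_rel0 r : is_relator nuc r -> g0eq r [::].
Proof. by move=> Hr; have := g0_rel Phi idx h [::] [::] Hr; rewrite /= cats0. Qed.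

Lemma sect1 v : sect (gone G) v = gone G.
Proof. by elim: v => //= x v IH; rewrite Phi1s. Qed.

Lemma weval_wsecv w v : weval (wsecv w v) = sect (weval w) v.
Proof.
elim: v w => [|x v IH] w //=.
by rewrite /wsecv /= -/(wsecv _ v) IH /sect /= (proj2 (piPhi hom Hidx w) x).
Qed.

Lemma weval_rel r : is_relator nuc r -> weval r = gone G.
Proof.
rewrite /weval; case=> [[i [-> E]]|[[i [j [-> E]]]|[i [j [k [-> E]]]]]] /=;
  by rewrite ?gmulr1 ?gmulA.
Qed.

Lemma wE1 x i : weval (wE Phi nuc idx h x i) = gone G.
Proof.
rewrite /wE weval_cat -(proj2 (piPhi hom Hidx (h x i)) x) (proj2 (Hh x i)).
by rewrite /weval /= gmulr1 gmulVr.
Qed.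

Lemma g0_weval w w' : g0eq w w' -> weval w = weval w'.
Proof.
elim.
- by [].
- by move=> w1 w2 _ ->.
- by move=> w1 w2 w3 _ -> _ ->.
- move=> a b i e; rewrite !weval_cat; congr gmul.
  by case: e; rewrite /weval /= gmulr1 ?gmulV ?gmulVr gmul1.
- by move=> a b r Hr; rewrite !weval_cat (weval_rel Hr) gmul1.
- by move=> a b x i v; rewrite !weval_cat weval_wsecv wE1 sect1 gmul1.
Qed.

Lemma rel_sec r y : is_relator nuc r -> is_relator nuc (wsec r y).
Proof.
case=> [[i [-> E]]|[[i [j [-> E]]]|[i [j [k [-> E]]]]]] /=.
- by left; exists (idx i y); split => //; rewrite -Hidx E Phi1s.
- right; left; exists (idx i y), (idx j (tau Phi nuc i y)); split => //.
  have [_ E2] := hom (nuc i) (nuc j); rewrite -!Hidx -E2 E Phi1s //.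
- right; right; exists (idx i y), (idx j (tau Phi nuc i y)),
    (idx k (tau Phi nuc j (tau Phi nuc i y))); split => //.
  have [_ E2] := hom (nuc i) (nuc j).
  have [E3 E4] := hom (gmul (nuc i) (nuc j)) (nuc k).
  have [E5 _] := hom (nuc i) (nuc j).
  by rewrite -!Hidx -E2 /tau -permM -E5 -E4 E Phi1s.
Qed.

Lemma wperm1 r : weval r = gone G -> wperm r = 1%g.
Proof. by move=> E; rewrite -(proj1 (piPhi hom Hidx r)) E Phi1p. Qed.

Lemma kill_sec a b r x : weval r = gone G -> (forall y, g0eq (wsec r y) [::]) ->
  g0eq (wsec (a ++ r ++ b) x) (wsec (a ++ b) x).
Proof.
move=> E H; rewrite !wsec_cat (wperm1 E) perm1.
by have := g0_ctx (wsec a x) (wsec b (wperm a x)) (H (wperm a x)).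
Qed.

Lemma g0_sec w w' : g0eq w w' -> forall x, g0eq (wsec w x) (wsec w' x).
Proof.
elim=> {w w'}.
- by move=> *; apply: g0_refl.
- by move=> w w' _ IH x; apply: g0_sym.
- by move=> w1 w2 w3 _ IH1 _ IH2 x; apply: g0_trans (IH1 x) (IH2 x).
- move=> a b i e x; apply: kill_sec.
    by case: e; rewrite /weval /= gmulr1 ?gmulV ?gmulVr.
  move=> y; case: e => /=; rewrite /lperm /lsec /=.
    by have := g0_cancel Phi nuc idx h [::] [::] (idx i ((tau Phi nuc i)^-1%g y)) true.
  rewrite permK.
  by have := g0_cancel Phi nuc idx h [::] [::] (idx i y) false.
- move=> a b r Hr x; apply: kill_sec; first exact: weval_rel.
  by move=> y; apply: g0_rel0; apply: rel_sec.
- move=> a b x0 i v x; apply: kill_sec.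
    by rewrite weval_wsecv wE1 sect1.
  move=> y; rewrite /wsecv -foldl_rcons -/(wsecv _ _).
  by have := g0_E Phi nuc idx h [::] [::] x0 i (rcons v y); rewrite /= cats0.
Qed.
End SS2.

Section SS3.
Variables (G : Grp) (d : nat) (Phi : G -> ('I_d -> G) * {perm 'I_d}).
Variables (l : nat) (nuc : 'I_l -> G) (idx : 'I_l -> 'I_d -> 'I_l).
Variable h : 'I_d -> 'I_l -> word l.
Hypothesis hom : is_ss_hom Phi.
Hypothesis Hidx : forall i x, (Phi (nuc i)).1 x = nuc (idx i x).
Hypothesis Hh : forall x i, (Phi (weval nuc (h x i))).2 x = x /\
               (Phi (weval nuc (h x i))).1 x = nuc i.

Local Notation wsec := (wsec Phi nuc idx).
Local Notation wsecv := (wsecv Phi nuc idx).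
Local Notation wperm := (wperm Phi nuc).
Local Notation weval := (weval nuc).
Local Notation lperm := (lperm Phi nuc).
Local Notation lsec := (lsec Phi nuc idx).
Local Notation g0eq := (g0eq Phi nuc idx h).
Local Notation sect := (sect Phi).

Definition linv (a : letter l) : letter l := (a.1, ~~ a.2).
Definition winv (w : word l) : word l := rev (map linv w).
Lemma winv_cons a w : winv (a :: w) = winv w ++ [:: linv a].
Proof. by rewrite /winv /= rev_cons cats1. Qed.
Lemma winv_cat u v : winv (u ++ v) = winv v ++ winv u.
Proof. by rewrite /winv map_cat rev_cat. Qed.
Lemma lperm_inv a : lperm (linv a) = (lperm a)^-1%g.
Proof. by case: a => i []; rewrite /lperm /= ?invgK. Qed.
Lemma wperm_cons' a w : wperm (a :: w) = (lperm a * wperm w)%g.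
Proof. by []. Qed.
Lemma wperm_winv w : wperm (winv w) = (wperm w)^-1%g.
Proof.
elim: w => [|a w IH]; first by rewrite /wperm /= invg1.
rewrite winv_cons wperm_cat IH wperm_cons' invMg; congr (_ * _)%g.
by rewrite /wperm /= mulg1 lperm_inv.
Qed.

Lemma wsec_winv w x : wsec (winv w) x = winv (wsec w ((wperm w)^-1%g x)).
Proof.
elim: w x => [|a w IH] x; first by [].
rewrite winv_cons wsec_cat IH wperm_winv /= cats0 invMg permM.
rewrite permKV winv_cat; congr (_ ++ _).
by case: a => i []; rewrite /lsec /lperm /= ?invgK ?permK.
Qed.

Lemma cancel_inv u b : g0eq (winv u ++ u ++ b) b.
Proof.
elim: u => [|c u IH]; first by apply: g0_refl.
rewrite winv_cons -catA; apply: g0_trans IH.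
have := g0_cancel Phi nuc idx h (winv u) (u ++ b) c.1 (~~ c.2).
by rewrite negbK; case: c.
Qed.

Lemma wperm_piPhi w : wperm w = (Phi (weval w)).2.
Proof. by rewrite (proj1 (piPhi hom Hidx w)). Qed.

Lemma selfrep_letter (x : 'I_d) (a : letter l) :
  exists k, wperm k x = x /\ g0eq (wsec k x) [:: a].
Proof.
case: a => i e.
have Px : wperm (h x i) x = x by rewrite wperm_piPhi (proj1 (Hh x i)).
have Hu : g0eq (wsec (h x i) x ++ [:: (i, true)]) [::].
  by have := g0_E Phi nuc idx h [::] [::] x i [::]; rewrite /= cats0.
have Pi : ((wperm (h x i))^-1)%g x = x.
  by apply: (@perm_inj _ (wperm (h x i))); rewrite permKV Px.
case: e.
  exists (winv (h x i)); split.
    by rewrite wperm_winv Pi.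
  rewrite wsec_winv Pi.
  apply: g0_trans (_ : g0eq (winv (wsec (h x i) x) ++
                    (wsec (h x i) x ++ [:: (i, true)])) _).
    by have := g0_ctx (winv (wsec (h x i) x)) [::] (g0_sym Hu); rewrite !cats0.
  by apply: cancel_inv.
exists (h x i); split => //.
apply: g0_trans (_ : g0eq ((wsec (h x i) x ++ [:: (i, true)]) ++ [:: (i, false)]) _).
  have := g0_cancel Phi nuc idx h (wsec (h x i) x) [::] i true.
  by rewrite cats0 -catA => H; apply: g0_sym.
by have := g0_cat Hu (g0_refl Phi nuc idx h [:: (i, false)]).
Qed.

Lemma selfrep (g : word l) (x : 'I_d) :
  exists k, wperm k x = x /\ g0eq (wsec k x) g.
Proof.
elim: g => [|a g [k [Pk Hk]]]; first by exists [::]; split; [rewrite /wperm /= perm1 | apply: g0_refl].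
have [ka [Pa Ha]] := selfrep_letter x a.
exists (ka ++ k); split; first by rewrite wperm_cat permM Pa Pk.
by rewrite wsec_cat Pa; apply: (g0_cat Ha Hk).
Qed.

Lemma g0_wsecv u u' v : g0eq u u' -> g0eq (wsecv u v) (wsecv u' v).
Proof.
elim: v u u' => [|x v IH] u u' H //=.
by rewrite /wsecv /=; apply: IH; apply: g0_sec.
Qed.

Lemma g0_wperm w w' : g0eq w w' -> wperm w = wperm w'.
Proof. by move=> H; rewrite !wperm_piPhi (g0_weval hom Hidx Hh H). Qed.
End SS3.

Lemma In_map (T1 T2 : Type) (f : T1 -> T2) (s : seq T1) y :
  List.In y (map f s) <-> exists x, f x = y /\ List.In x s.
Proof.
elim: s => [|a s IH] /=; first by split=> // [[x []]].
split.
  case=> [<-|/IH [x [E H]]]; first by exists a; split=> //; left.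
  by exists x; split=> //; right.
case=> x [E [->|H]]; first by left.
by right; apply/IH; exists x.
Qed.

Lemma inP (T : eqType) (x : T) (s : seq T) : x \in s -> List.In x s.
Proof.
elim: s => [|a s IH] //=; rewrite in_cons => /orP [/eqP ->|/IH]; by [left|right].
Qed.

Lemma unif (T : eqType) (s : seq T) (P : T -> nat -> Prop) :
  (forall t k k', k <= k' -> P t k -> P t k') -> (forall t, exists k, P t k) ->
  exists K, forall t, t \in s -> P t K.
Proof.
move=> Pm Pe; elim: s => [|a s [K HK]]; first by exists 0.
have [ka Ha] := Pe a; exists (maxn ka K) => t; rewrite in_cons => /orP [/eqP ->|Ht].
  by apply: Pm Ha; apply: leq_maxl.
by apply: Pm (HK t Ht); apply: leq_maxr.
Qed.

Section SS4.
Variables (G : Grp) (d : nat) (Phi : G -> ('I_d -> G) * {perm 'I_d}).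
Variables (l : nat) (nuc : 'I_l -> G) (idx : 'I_l -> 'I_d -> 'I_l).
Variable h : 'I_d -> 'I_l -> word l.
Variable x0 : 'I_d.
Hypothesis hom : is_ss_hom Phi.
Hypothesis Hidx : forall i x, (Phi (nuc i)).1 x = nuc (idx i x).
Hypothesis Hh : forall x i, (Phi (weval nuc (h x i))).2 x = x /\
               (Phi (weval nuc (h x i))).1 x = nuc i.
Hypothesis Hinj : injective nuc.
Hypothesis Hnuc : is_nucleus Phi [seq nuc i | i <- enum 'I_l].

Local Notation wsec := (wsec Phi nuc idx).
Local Notation wsecv := (wsecv Phi nuc idx).
Local Notation wperm := (wperm Phi nuc).
Local Notation weval := (weval nuc).
Local Notation lperm := (lperm Phi nuc).
Local Notation lsec := (lsec Phi nuc idx).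
Local Notation g0eq := (g0eq Phi nuc idx h).
Local Notation sect := (sect Phi).
Local Notation N := [seq nuc i | i <- enum 'I_l].

Lemma inN g : List.In g N <-> exists i, nuc i = g.
Proof.
rewrite In_map; split; first by case=> i [E _]; exists i.
by case=> i E; exists i; split=> //; apply: inP; rewrite mem_enum.
Qed.

Lemma one_in_N : exists m0, nuc m0 = gone G.
Proof.
have [k Hk] := proj1 Hnuc (gone G).
have /inN [m0 E] := Hk (nseq k x0) (eq_leq (esym (size_nseq k x0))).
by exists m0; rewrite E sect1.
Qed.

Lemma sect_inv g v : exists v', size v' = size v /\ sect (ginv g) v' = ginv (sect g v).
Proof.
elim: v g => [|x v IH] g; first by exists [::].
have [v'' [S E]] := IH ((Phi g).1 x).
exists ((Phi g).2 x :: v''); split; first by rewrite /= S.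
by rewrite /sect /= PhiVs // permK.
Qed.

Lemma ginvK (a : G) : ginv (ginv a) = a.
Proof. by apply: esym; apply: ginv_uniq; apply: gmulVr. Qed.

Lemma inv_closed i : exists j, gmul (nuc i) (nuc j) = gone G.
Proof.
set M' := map (@ginv G) N.
have CM : contracting_set Phi M'.
  move=> g; have [k Hk] := proj1 Hnuc (ginv g); exists k => v Hv.
  have [v' [S E]] := sect_inv g v.
  have /inN [j Ej] : List.In (sect (ginv g) v') N by apply: Hk; rewrite S.
  apply/In_map; exists (nuc j); split; last by apply/inN; exists j.
  by rewrite Ej E ginvK.
have /In_map [n [En /inN [j Ej]]] := proj2 Hnuc M' CM (nuc i) (proj2 (inN _) (ex_intro _ i erefl)).
by exists j; rewrite -En -Ej gmulV.
Qed.
End SS4.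
Section SS5.
Variables (G : Grp) (d : nat) (Phi : G -> ('I_d -> G) * {perm 'I_d}).
Variables (l : nat) (nuc : 'I_l -> G) (idx : 'I_l -> 'I_d -> 'I_l).
Variable h : 'I_d -> 'I_l -> word l.
Variable x0 : 'I_d.
Hypothesis hom : is_ss_hom Phi.
Hypothesis Hidx : forall i x, (Phi (nuc i)).1 x = nuc (idx i x).
Hypothesis Hh : forall x i, (Phi (weval nuc (h x i))).2 x = x /\
               (Phi (weval nuc (h x i))).1 x = nuc i.
Hypothesis Hinj : injective nuc.
Hypothesis Hnuc : is_nucleus Phi [seq nuc i | i <- enum 'I_l].

Local Notation wsec := (wsec Phi nuc idx).
Local Notation wsecv := (wsecv Phi nuc idx).
Local Notation wperm := (wperm Phi nuc).
Local Notation weval := (weval nuc).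
Local Notation lperm := (lperm Phi nuc).
Local Notation lsec := (lsec Phi nuc idx).
Local Notation g0eq := (g0eq Phi nuc idx h).
Local Notation sect := (sect Phi).
Local Notation N := [seq nuc i | i <- enum 'I_l].

Lemma letter_pos a : exists p, g0eq [:: a] [:: (p, false)] /\ nuc p = leval nuc a.
Proof.
case: a => i [] /=; last by exists i; split=> //; apply: g0_refl.
have [j Ej] := inv_closed hom Hnuc i.
exists j; split; last first.
  by rewrite /leval /= (ginv_uniq Ej) ginvK.
apply: g0_trans (_ : g0eq [:: (i, true); (i, false); (j, false)] _).
  apply: g0_sym.
  have Hr : is_relator nuc [:: (i, false); (j, false)] by right; left; exists i, j.
  by have := g0_rel Phi idx h [:: (i, true)] [::] Hr; rewrite cats0.
by have := g0_cancel Phi nuc idx h [::] [:: (j, false)] i true.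
Qed.

Lemma reduce2 b c i : weval [:: b; c] = nuc i -> g0eq [:: b; c] [:: (i, false)].
Proof.
move=> E.
have [p [Hp Ep]] := letter_pos b; have [q [Hq Eq]] := letter_pos c.
have [i' Ei] := inv_closed hom Hnuc i.
have Ei' : gmul (nuc i') (nuc i) = gone G by rewrite (ginv_uniq Ei) gmulVr.
apply: g0_trans (_ : g0eq [:: (p, false); (q, false)] _).
  by have := g0_cat Hp Hq.
apply: g0_trans (_ : g0eq [:: (p, false); (q, false); (i', false); (i, false)] _).
  apply: g0_sym.
  have Hr : is_relator nuc [:: (i', false); (i, false)] by right; left; exists i', i.
  by have := g0_rel Phi idx h [:: (p, false); (q, false)] [::] Hr; rewrite cats0.
have Hr : is_relator nuc [:: (p, false); (q, false); (i', false)].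
  right; right; exists p, q, i'; split=> //.
  by move: E; rewrite /weval /= gmulr1 -Ep -Eq => ->.
by have := g0_rel Phi idx h [::] [:: (i, false)] Hr.
Qed.

Lemma size_wsec w x : size (wsec w x) = size w.
Proof. by elim: w x => [|[i []] w IH] x //=; rewrite IH. Qed.
Lemma size_wsecv w v : size (wsecv w v) = size w.
Proof. by elim: v w => [|x v IH] w //=; rewrite /wsecv /= -/(wsecv _ v) IH size_wsec. Qed.
Lemma wsecv_nil v : wsecv [::] v = [::].
Proof. by elim: v. Qed.

Fixpoint vact (u : word l) (v : seq 'I_d) : seq 'I_d :=
  match v with [::] => [::] | x :: v' => wperm u x :: vact (wsec u x) v' end.
Lemma size_vact u v : size (vact u v) = size v.
Proof. by elim: v u => [|x v IH] u //=; rewrite IH. Qed.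
Lemma wsecv_cat u w v : wsecv (u ++ w) v = wsecv u v ++ wsecv w (vact u v).
Proof.
elim: v u w => [|x v IH] u w //=.
by rewrite /wsecv /= -!/(wsecv _ v) wsec_cat IH.
Qed.
Lemma wsecvS w v1 v2 : wsecv w (v1 ++ v2) = wsecv (wsecv w v1) v2.
Proof. by rewrite /wsecv foldl_cat. Qed.

Definition Qc (w : word l) (k : nat) : Prop :=
  forall v, k <= size v -> exists i, g0eq (wsecv w v) [:: (i, false)].

Lemma Qc_mono w k k' : k <= k' -> Qc w k -> Qc w k'.
Proof. by move=> L H v Hv; apply: H; apply: leq_trans Hv. Qed.

Lemma Qc_pair b c : exists k, Qc [:: b; c] k.
Proof.
have [k Hk] := proj1 Hnuc (weval [:: b; c]); exists k => v Hv.
have /inN [i Ei] := Hk v Hv.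
exists i; move: (size_wsecv [:: b; c] v) (weval_wsecv hom Hidx [:: b; c] v).
case: (wsecv [:: b; c] v) => [|b' [|c' [|]]] //= _ E.
by apply: reduce2; rewrite Ei -E.
Qed.

Lemma Qc_all g : exists k, Qc g k.
Proof.
have [K2 HK2] := @unif _ (enum {: letter l * 'I_l})
  (fun t k => Qc [:: t.1; (t.2, false)] k) (fun t => @Qc_mono _) (fun t => Qc_pair _ _).
elim: g => [|a g [k1 Hk1]].
  have [m0 Em0] := one_in_N x0 hom Hnuc.
  exists 0 => v _; exists m0; rewrite wsecv_nil; apply: g0_sym; apply: g0_rel0.
  by left; exists m0.
exists (k1 + K2) => v Hv.
have Hk1v : k1 <= size v by apply: leq_trans Hv; apply: leq_addr.
rewrite -(cat_take_drop k1 v) wsecvS.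
have := wsecv_cat [:: a] g (take k1 v); rewrite cat1s => ->.
have [m Hm] : exists m, g0eq (wsecv g (vact [:: a] (take k1 v))) [:: (m, false)].
  by apply: Hk1; rewrite size_vact size_takel.
move: (size_wsecv [:: a] (take k1 v)).
case: (wsecv [:: a] (take k1 v)) => [|b [|]] //= _.
have H1 := g0_wsecv hom Hidx Hh (drop k1 v) (g0_cat (g0_refl Phi nuc idx h [:: b]) Hm).
have [i Hi] : exists i, g0eq (wsecv [:: b; (m, false)] (drop k1 v)) [:: (i, false)].
  by apply: (HK2 (b, m)); [rewrite mem_enum | rewrite size_drop leq_subRL // addnC].
by exists i; apply: g0_trans H1 Hi.
Qed.
End SS5.
Section SS6.
Variables (G : Grp) (d : nat) (Phi : G -> ('I_d -> G) * {perm 'I_d}).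
Variables (l : nat) (nuc : 'I_l -> G) (idx : 'I_l -> 'I_d -> 'I_l).
Variable h : 'I_d -> 'I_l -> word l.
Variable x0 : 'I_d.
Hypothesis hom : is_ss_hom Phi.
Hypothesis Hidx : forall i x, (Phi (nuc i)).1 x = nuc (idx i x).
Hypothesis Hh : forall x i, (Phi (weval nuc (h x i))).2 x = x /\
               (Phi (weval nuc (h x i))).1 x = nuc i.
Hypothesis Hinj : injective nuc.
Hypothesis Hnuc : is_nucleus Phi [seq nuc i | i <- enum 'I_l].

Local Notation wsec := (wsec Phi nuc idx).
Local Notation wsecv := (wsecv Phi nuc idx).
Local Notation wperm := (wperm Phi nuc).
Local Notation weval := (weval nuc).
Local Notation lperm := (lperm Phi nuc).
Local Notation lsec := (lsec Phi nuc idx).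
Local Notation g0eq := (g0eq Phi nuc idx h).
Local Notation sect := (sect Phi).
Local Notation N := [seq nuc i | i <- enum 'I_l].

Fixpoint allw (k : nat) : seq (seq 'I_d) :=
  if k is k'.+1 then List.flat_map (fun x => List.map (cons x) (allw k')) (enum 'I_d)
  else [:: [::]].

Lemma allw_in v : List.In v (allw (size v)).
Proof.
elim: v => [|x v IH] /=; first by left.
apply/List.in_flat_map; exists x; split; first by apply: inP; rewrite mem_enum.
by apply: List.in_map.
Qed.
Lemma allw_size k v : List.In v (allw k) -> size v = k.
Proof.
elim: k v => [|k IH] v /=; first by case=> // <-.
by case/List.in_flat_map=> x [_ /List.in_map_iff [v' [<- /IH <-]]].
Qed.

Definition Nk k := List.flat_map (fun n => List.map (sect n) (allw k)) N.

Lemma Nk_contr k : contracting_set Phi (Nk k).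
Proof.
move=> g; have [k0 Hk0] := proj1 Hnuc g; exists (k0 + k) => v Hv.
have Hs : k <= size v by apply: leq_trans Hv; apply: leq_addl.
rewrite -(cat_take_drop (size v - k) v) /sect foldl_cat -/(sect _ _) -/(sect _ _).
apply/List.in_flat_map; exists (sect g (take (size v - k) v)); split.
  by apply: Hk0; rewrite size_takel ?leq_subr // leq_subRL // addnC.
apply: List.in_map; have := allw_in (drop (size v - k) v).
by rewrite size_drop subKn.
Qed.

Lemma Nk_sect k i : exists j v, size v = k /\ sect (nuc j) v = nuc i.
Proof.
have := proj2 Hnuc (Nk k) (Nk_contr k) (nuc i) (proj2 (inN nuc (nuc i)) (ex_intro _ i erefl)).
case/List.in_flat_map=> n [/inN [j <-] /List.in_map_iff [v [E /allw_size S]]].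
by exists j, v.
Qed.

Lemma wsecv_pos j v : exists j', wsecv [:: (j, false)] v = [:: (j', false)] /\
  nuc j' = sect (nuc j) v.
Proof.
elim: v j => [|x v IH] j /=; first by exists j.
have [j' [E1 E2]] := IH (idx j x); exists j'.
by rewrite /wsecv /= -/(wsecv _ v) E1 /sect /= Hidx.
Qed.

Lemma minimal M : g0_contracting_set Phi nuc idx h M ->
  forall s, List.In s (Simg l) -> exists m, List.In m M /\ g0eq s m.
Proof.
move=> HM s /In_map [i [<- _]].
have [K HK] := @unif _ (enum 'I_l)
  (fun j k => forall v, k <= size v -> exists m, List.In m M /\
      g0eq (wsecv [:: (j, false)] v) m)
  (fun j k k' L H v Hv => H v (leq_trans L Hv)) (fun j => HM [:: (j, false)]).
have [j [v [S E]]] := Nk_sect K i.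
have [j' [E1 E2]] := wsecv_pos j v.
have Ej : j' = i by apply: Hinj; rewrite E2 E.
have [m [Hm Hm2]] := HK j (mem_enum _ j) v (eq_leq (esym S)).
by exists m; split=> //; rewrite E1 Ej in Hm2.
Qed.

Lemma Simg_contr : g0_contracting_set Phi nuc idx h (Simg l).
Proof.
move=> g; have [k Hk] := Qc_all x0 hom Hidx Hh Hnuc g.
exists k => v Hv; have [i Hi] := Hk v Hv.
exists [:: (i, false)]; split; last exact: Hi.
by apply/In_map; exists i; split=> //; apply: inP; rewrite mem_enum.
Qed.
End SS6.

Theorem mainTheorem3 (G : Grp) (d : nat)
  (Phi : G -> ('I_d -> G) * {perm 'I_d})
  (l : nat) (nuc : 'I_l -> G) (idx : 'I_l -> 'I_d -> 'I_l)
  (h : 'I_d -> 'I_l -> word l) :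
  2 <= d ->
  is_ss_hom Phi ->
  contracting Phi ->
  self_replicating Phi ->
  fin_gen G ->
  (* n_1, ..., n_l is an enumeration (without repetition) of the nucleus *)
  injective nuc ->
  is_nucleus Phi [seq nuc i | i <- enum 'I_l] ->
  (forall i x, (Phi (nuc i)).1 x = nuc (idx i x)) ->
  (* h(x,n_i) maps under pi^un to some g(x,n_i) with x g = x, g_x = n_i *)
  (forall x i, (Phi (weval nuc (h x i))).2 x = x /\
               (Phi (weval nuc (h x i))).1 x = nuc i) ->
  (* phi^un induces phi_1 : G_0 -> G_0 wr S_d *)
  (forall w w', g0eq Phi nuc idx h w w' ->
     wperm Phi nuc w = wperm Phi nuc w' /\
     forall x, g0eq Phi nuc idx h (wsec Phi nuc idx w x) (wsec Phi nuc idx w' x)) /\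
  (* (G_0, phi_1) is contracting with nucleus the image of S *)
  g0_contracting_set Phi nuc idx h (Simg l) /\
  (forall M, g0_contracting_set Phi nuc idx h M ->
     forall s, List.In s (Simg l) -> exists m, List.In m M /\ g0eq Phi nuc idx h s m) /\
  (* (G_0, phi_1) is self-replicating *)
  (forall (g : word l) (x : 'I_d), exists k : word l,
     wperm Phi nuc k x = x /\ g0eq Phi nuc idx h (wsec Phi nuc idx k x) g) /\
  (* pihat o phi_1 = Phi o pi *)
  (forall w : word l, (Phi (weval nuc w)).2 = wperm Phi nuc w /\
     forall x, (Phi (weval nuc w)).1 x = weval nuc (wsec Phi nuc idx w x)).
Proof.
move=> Hd hom _ _ _ Hinj Hnuc Hidx Hh.
have x0 : 'I_d := Ordinal (leq_trans (isT : 0 < 2) Hd).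
split.
  by move=> w w' H; split; [apply: g0_wperm H | apply: g0_sec H].
split; first by apply: (Simg_contr x0).
split; first by move=> M HM s Hs; apply: (minimal Hidx Hinj Hnuc HM Hs).
split; first by move=> g x; apply: selfrep.
by move=> w; apply: piPhi.
Qed.
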